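(* Let $\underline{T}=(T_1,\ldots,T_n)$ be a spherical unitary on a Hilbert space $\mathcal{H}$, i.e. $T_iT_j=T_jT_i$ for all $i,j$, each $T_i$ is normal, and $\sum_{i=1}^nT_iT_i^*=I$. Let $\tilde{\underline{V}}$ on $\tilde{\mathcal{H}}\supseteq\mathcal{H}$ be the minimal isometric dilation of $\underline{T}$. Then the maximal commuting piece of $\tilde{\underline{V}}$ is $\underline{T}$, i.e. $\tilde{\mathcal{H}}^c(\tilde{\underline{V}})=\mathcal{H}$ and $\tilde V_i^c=T_i$ for all $i$.
   Context: Notation: $\Lambda=\{1,\ldots,n\}$, $\tilde\Lambda=\bigcup_{m\ge0}\Lambda^m$; $\underline{R}^\alpha=R_{\alpha_1}\cdots R_{\alpha_m}$, $\underline{R}^0=I$. The minimal isometric dilation of a contractive tuple $\underline{T}$ on $\mathcal{H}$ is a tuple $\tilde{\underline{V}}$ of isometries with mutually orthogonal ranges on $\tilde{\mathcal{H}}\supseteq\mathcal{H}$ with $\tilde V_i^*h=T_i^*h$ for $h\in\mathcal{H}$ and $\overline{\mathrm{span}}\{\tilde{\underline{V}}^\alpha h:h\in\mathcal{H},\alpha\in\tilde\Lambda\}=\tilde{\mathcal{H}}$ (unique up to unitary equivalence fixing $\mathcal{H}$). Maximal commuting piece of a tuple $\underline{R}$ on $\mathcal{L}$: the largest closed subspace $\mathcal{L}^c(\underline{R})$ invariant under all $R_i^*$ on which $R_i^*R_j^*h=R_j^*R_i^*h$ for all $i,j$; $R_i^c=P_{\mathcal{L}^c(\underline{R})}R_i|_{\mathcal{L}^c(\underline{R})}$.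 *)

(* Defs.v *)
From HB Require Import structures.
From mathcomp Require Import all_boot all_order all_algebra.
From mathcomp Require Import reals.
From mathcomp Require Export complex.
Set Implicit Arguments.
Unset Strict Implicit.
Unset Printing Implicit Defensive.
Import Order.TTheory GRing.Theory Num.Theory.
Local Open Scope ring_scope.

Section Hilbert.
Variable R : realType.
Local Notation C := R[i].

(* ip is linear in the first and conjugate-linear in the second arg.   *)
Section Space.
Variable H : lmodType C.
Variable ip : H -> H -> C.

Definition is_inner_product : Prop :=
  [/\ (forall (a : C) (x y z : H), ip (a *: x + y) z = a * ip x z + ip y z),
      (forall x y : H, ip x y = ((ip y x)^*)%C),
      (forall x : H, 0 <= ip x x) &
      (forall x : H, ip x x = 0 -> x = 0)].

Definition nsq (x : H) : R := complex.Re (ip x x).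

Definition converges_to (u : nat -> H) (x : H) : Prop :=
  forall e : R, 0 < e -> exists N : nat, forall m : nat, (N <= m)%N ->
    nsq (u m - x) < e.

Definition cauchy_seq (u : nat -> H) : Prop :=
  forall e : R, 0 < e -> exists N : nat, forall m k : nat,
    (N <= m)%N -> (N <= k)%N -> nsq (u m - u k) < e.

Definition is_hilbert : Prop :=
  is_inner_product /\
  forall u : nat -> H, cauchy_seq u -> exists x : H, converges_to u x.

(* A map on a
   Hilbert space admits an adjoint iff it is a bounded linear operator
   (Hellinger--Toeplitz), so "T with adjoint Tadj" = "bounded operator T". *)
Definition is_adjoint (T S : H -> H) : Prop :=
  forall x y : H, ip (T x) y = ip x (S y).

Definition closed_subspace (M : H -> Prop) : Prop :=
  [/\ M 0,
      (forall (a : C) (x y : H), M x -> M y -> M (a *: x + y)) &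
      (forall (u : nat -> H) (x : H), (forall k, M (u k)) ->
          converges_to u x -> M x)].

Definition is_orth_proj (M : H -> Prop) (x y : H) : Prop :=
  M y /\ forall z : H, M z -> ip (x - y) z = 0.

Variable n : nat.

Definition commuting_piece_cand (Radj : 'I_n -> H -> H) (M : H -> Prop) :=
  [/\ closed_subspace M,
      (forall i x, M x -> M (Radj i x)) &
      (forall i j x, M x -> Radj i (Radj j x) = Radj j (Radj i x))].

Definition is_max_commuting_space (Radj : 'I_n -> H -> H) (M : H -> Prop) :=
  commuting_piece_cand Radj M /\
  forall M' : H -> Prop, commuting_piece_cand Radj M' ->
    forall x, M' x -> M x.

Fixpoint word_op (Rop : 'I_n -> H -> H) (alpha : seq 'I_n) : H -> H :=
  match alpha with
  | [::] => id
  | i :: s => fun x => Rop i (word_op Rop s x)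
  end.

End Space.

Definition spherical_unitary (H : lmodType C) (n : nat)
    (T Tadj : 'I_n -> H -> H) : Prop :=
  [/\ (forall i j x, T i (T j x) = T j (T i x)),
      (forall i x, T i (Tadj i x) = Tadj i (T i x)) &
      (forall x, \sum_(i < n) T i (Tadj i x) = x)].

(* Minimal isometric dilation.  The big space K contains H via the     *)
(* isometric linear embedding J (H is identified with range J).        *)
Definition is_min_isometric_dilation (H K : lmodType C)
    (ipH : H -> H -> C) (ipK : K -> K -> C) (n : nat)
    (Tadj : 'I_n -> H -> H) (J : H -> K) (V Vadj : 'I_n -> K -> K) : Prop :=
  [/\
      (forall (a : C) (x y : H), J (a *: x + y) = a *: J x + J y),
      (forall x y : H, ipK (J x) (J y) = ipH x y),
      (forall i (x y : K), ipK (V i x) (V i y) = ipK x y) &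
      (forall i j (x y : K), i != j -> ipK (V i x) (V j y) = 0)] /\
  (forall i (h : H), Vadj i (J h) = J (Tadj i h)) /\
      (* minimality: the closed span of V^alpha h is all of K *)
      (forall z : K, exists u : nat -> K,
          converges_to ipK u z /\
          forall k, exists (m : nat) (c : 'I_m -> C)
                           (w : 'I_m -> seq 'I_n) (h : 'I_m -> H),
            u k = \sum_(l < m) c l *: word_op V (w l) (J (h l))).

End Hilbert.

(* Main.v *)
Require Import Defs.
From HB Require Import structures.
From mathcomp Require Import all_boot all_order all_algebra.
From mathcomp Require Import reals complex ring lra.
From Stdlib Require Import IndefiniteDescription.
Set Implicit Arguments. Unset Strict Implicit. Unset Printing Implicit Defensive.
Import Order.TTheory GRing.Theory Num.Theory.
Local Open Scope ring_scope.

Section IP.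
Variable R : realType.
Variable H : lmodType R[i].
Variable ip : H -> H -> R[i].
Hypothesis hip : is_inner_product ip.
Local Notation cj := (@conjc R).
Lemma cjD a b : cj (a + b) = cj a + cj b. Proof. exact: rmorphD. Qed.
Lemma cjM a b : cj (a * b) = cj a * cj b. Proof. exact: rmorphM. Qed.
Lemma cjN a : cj (- a) = - cj a. Proof. exact: rmorphN. Qed.
Lemma cjB a b : cj (a - b) = cj a - cj b. Proof. exact: rmorphB. Qed.
Lemma cj0 : cj 0 = 0. Proof. exact: rmorph0. Qed.
Lemma cjK a : cj (cj a) = a. Proof. exact: conjcK. Qed.

Lemma ip0l z : ip 0 z = 0.
Proof.
case: hip => lin _ _ _.
have := lin 1 0 0 z; rewrite scale1r addr0 mul1r => e.
by apply: (@addrI _ (ip 0 z)); rewrite addr0 -e.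
Qed.
Lemma ipDl x y z : ip (x + y) z = ip x z + ip y z.
Proof. by case: hip => lin _ _ _; rewrite -{1}[x]scale1r lin mul1r. Qed.
Lemma ipZl a x z : ip (a *: x) z = a * ip x z.
Proof. by case: hip => lin _ _ _; rewrite -[a *: x]addr0 lin ip0l addr0. Qed.
Lemma ipNl x z : ip (- x) z = - ip x z.
Proof. by rewrite -scaleN1r ipZl mulN1r. Qed.
Lemma ipBl x y z : ip (x - y) z = ip x z - ip y z.
Proof. by rewrite ipDl ipNl. Qed.
Lemma ipC x y : ip x y = cj (ip y x).
Proof. by case: hip. Qed.
Lemma ipDr x y z : ip z (x + y) = ip z x + ip z y.
Proof. by rewrite ipC ipDl cjD -!ipC. Qed.
Lemma ipZr a x z : ip z (a *: x) = cj a * ip z x.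
Proof. by rewrite ipC ipZl cjM -ipC. Qed.
Lemma ip0r z : ip z 0 = 0.
Proof. by rewrite ipC ip0l cj0. Qed.
Lemma ipNr x z : ip z (- x) = - ip z x.
Proof. by rewrite ipC ipNl cjN -ipC. Qed.
Lemma ipBr x y z : ip z (x - y) = ip z x - ip z y.
Proof. by rewrite ipDr ipNr. Qed.
Lemma ip_suml m (f : 'I_m -> H) z : ip (\sum_(k < m) f k) z = \sum_(k < m) ip (f k) z.
Proof. by elim/big_rec2: _ => [|k a b _ <-]; rewrite ?ip0l ?ipDl. Qed.
Lemma ip_sumr m (f : 'I_m -> H) z : ip z (\sum_(k < m) f k) = \sum_(k < m) ip z (f k).
Proof. by elim/big_rec2: _ => [|k a b _ <-]; rewrite ?ip0r ?ipDr. Qed.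
Lemma ipxx_ge0 x : 0 <= ip x x.
Proof. by case: hip. Qed.
Lemma ipxx_eq0 x : ip x x = 0 -> x = 0.
Proof. by case: hip => _ _ _; apply. Qed.
Lemma ipxx_real x : ip x x = (complex.Re (ip x x))%:C%C.
Proof. by rewrite RRe_real // ger0_real // ipxx_ge0. Qed.
Lemma cj_ipxx x : cj (ip x x) = ip x x.
Proof. by rewrite -ipC. Qed.
Lemma ip_eqr u v : (forall w, ip w u = ip w v) -> u = v.
Proof.
move=> e; apply/eqP; rewrite -subr_eq0; apply/eqP/ipxx_eq0.
by rewrite ipBr e subrr.
Qed.
Lemma ip_eql u v : (forall w, ip u w = ip v w) -> u = v.
Proof.
move=> e; apply/eqP; rewrite -subr_eq0; apply/eqP/ipxx_eq0.
by rewrite ipBl e subrr.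
Qed.
Lemma nsq_ge0 x : 0 <= nsq ip x.
Proof. by rewrite /nsq -ler0c -ipxx_real ipxx_ge0. Qed.
Let rcD (a b : R) : (a + b)%:C%C = a%:C%C + b%:C%C :> R[i]. Proof. exact: rmorphD. Qed.
Let rcM (a b : R) : (a * b)%:C%C = a%:C%C * b%:C%C :> R[i]. Proof. exact: rmorphM. Qed.
Let rcn k : (k%:R : R)%:C%C = k%:R :> R[i]. Proof. exact: rmorph_nat. Qed.

Lemma nsqE x : ip x x = (nsq ip x)%:C%C.
Proof. exact: ipxx_real. Qed.
Lemma nsqN x : nsq ip (- x) = nsq ip x.
Proof. by rewrite /nsq (ipNl) (ipNr) opprK. Qed.
Lemma nsqB x y : nsq ip (x - y) = nsq ip (y - x).
Proof. by rewrite -nsqN opprB. Qed.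
Lemma nsq_para x y : nsq ip (x + y) <= 2 * nsq ip x + 2 * nsq ip y.
Proof.
have e : nsq ip (x + y) + nsq ip (x - y) = 2 * nsq ip x + 2 * nsq ip y.
  apply: complexI; rewrite !rcD !rcM -!nsqE (rcn 2).
  rewrite !ipBl !ipBr !ipDl !ipDr; ring.
have := nsq_ge0 (x - y); lra.
Qed.
Lemma nsq_pyth a b : ip a b = 0 -> nsq ip (a - b) = nsq ip a + nsq ip b.
Proof.
move=> hab; have hba : ip b a = 0 by rewrite ipC hab cj0.
apply: complexI; rewrite !rcD -!nsqE ipBl !ipBr hab hba; ring.
Qed.
Lemma nsq_le0 x : nsq ip x <= 0 -> x = 0.
Proof.
move=> h; apply: ipxx_eq0; rewrite nsqE.
have -> : nsq ip x = 0 by apply/eqP; rewrite eq_le h nsq_ge0.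
by [].
Qed.
End IP.


Lemma real_key (R : realType) (a b s : R) : 0 <= s -> 0 <= b ->
  (forall (N : nat) (t : R), 0 <= N%:R * a - 2 * t * N%:R * b + t ^+ 2 * s) -> b = 0.
Proof.
move=> hs hb hq.
have ha : 0 <= a by have := hq 1%N 0; rewrite mul1r !mulr0 mul0r !expr0n /= mul0r; lra.
pose u := s + 1.
have hu : 0 < u by rewrite /u; lra.
have key : forall N : nat, (0 < N)%N -> N%:R * b ^+ 2 <= a * u ^+ 2.
  move=> N hN.
  pose t := N%:R * b / u.
  have htu : t * u = N%:R * b by rewrite /t divfK // gt_eqF.
  have hN' : (1 : R) <= N%:R by rewrite ler1n.
  have := hq N t => h0.
  have h1 : 0 <= (N%:R * a - 2 * t * N%:R * b + t ^+ 2 * s) * u ^+ 2.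
    by apply: mulr_ge0 => //; apply: sqr_ge0.
  have e : (N%:R * a - 2 * t * N%:R * b + t ^+ 2 * s) * u ^+ 2 =
     N%:R * a * u ^+ 2 - 2 * (t * u) * N%:R * b * u + (t * u) ^+ 2 * s.
    by rewrite /u; ring.
  rewrite e htu in h1.
  have h2 : N%:R * (N%:R * b ^+ 2) <= N%:R * (a * u ^+ 2).
    rewrite /u in h1 *; nra.
  by rewrite ler_pM2l // in h2; lra.
apply/eqP; rewrite eq_le hb andbT; rewrite leNgt; apply/negP => hb0.
have hb2 : 0 < b ^+ 2 by rewrite exprn_gt0.
pose x := a * u ^+ 2 / b ^+ 2.
have hx : 0 <= x by rewrite /x divr_ge0 // ?mulr_ge0 // ?sqr_ge0 // ltW.
have := archimedean.Num.Theory.archi_boundP hx => hlt.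
set N := archimedean.Num.Def.archi_bound x in hlt.
have k1 := key N.+1 isT.
have k2 : a * u ^+ 2 < N.+1%:R * b ^+ 2.
  rewrite -ltr_pdivrMr // -/x; apply: lt_le_trans hlt _; rewrite ler_nat; exact: leqnSn.
lra.
Qed.


Section Main.
Variables (R : realType) (n : nat)
    (H : lmodType R[i]) (ipH : H -> H -> R[i])
    (K : lmodType R[i]) (ipK : K -> K -> R[i])
    (T Tadj : 'I_n -> H -> H) (J : H -> K) (V Vadj : 'I_n -> K -> K).
Hypotheses (hH : is_hilbert ipH) (hK : is_hilbert ipK)
  (adjT : forall i, is_adjoint ipH (T i) (Tadj i))
  (adjV : forall i, is_adjoint ipK (V i) (Vadj i))
  (sph : spherical_unitary T Tadj)
  (dil : is_min_isometric_dilation ipH ipK Tadj J V Vadj).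
Local Notation cj := (@conjc R).

Let hipH : is_inner_product ipH. Proof. by case: hH. Qed.
Let hipK : is_inner_product ipK. Proof. by case: hK. Qed.

Lemma adjT' i x y : ipH x (T i y) = ipH (Tadj i x) y.
Proof. by rewrite (ipC hipH) adjT -(ipC hipH). Qed.
Lemma adjV' i x y : ipK x (V i y) = ipK (Vadj i x) y.
Proof. by rewrite (ipC hipK) adjV -(ipC hipK). Qed.

Lemma Jlin a x y : J (a *: x + y) = a *: J x + J y.
Proof. by case: dil => [[]]. Qed.
Lemma Jiso x y : ipK (J x) (J y) = ipH x y.
Proof. by case: dil => [[]]. Qed.
Lemma Viso j x y : ipK (V j x) (V j y) = ipK x y.
Proof. by case: dil => [[]]. Qed.
Lemma Vorth j k x y : j != k -> ipK (V j x) (V k y) = 0.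
Proof. by case: dil => [[]] _ _ _ h _; apply: h. Qed.
Lemma Vdil j h : Vadj j (J h) = J (Tadj j h).
Proof. by case: dil => _ []. Qed.

Lemma J0 : J 0 = 0.
Proof.
have := Jlin 1 0 0; rewrite !scale1r addr0 => e.
by apply: (@addrI _ (J 0)); rewrite addr0 -e.
Qed.
Lemma JD x y : J (x + y) = J x + J y.
Proof. by rewrite -{1}[x]scale1r Jlin scale1r. Qed.
Lemma JZ a x : J (a *: x) = a *: J x.
Proof. by rewrite -[a *: x]addr0 Jlin J0 addr0. Qed.
Lemma JB x y : J (x - y) = J x - J y.
Proof. by rewrite JD -scaleN1r JZ scaleN1r. Qed.
Lemma Jsum m (f : 'I_m -> H) : J (\sum_(k < m) f k) = \sum_(k < m) J (f k).
Proof. by elim/big_rec2: _ => [|k a b _ <-]; rewrite ?J0 ?JD. Qed.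

Lemma commT i j x : T i (T j x) = T j (T i x).
Proof. by case: sph. Qed.
Lemma normT i x : T i (Tadj i x) = Tadj i (T i x).
Proof. by case: sph. Qed.
Lemma sumT x : \sum_(j < n) T j (Tadj j x) = x.
Proof. by case: sph. Qed.

Lemma Tadj_comm i j x : Tadj i (Tadj j x) = Tadj j (Tadj i x).
Proof.
apply: (ip_eqr hipH) => w.
by rewrite -!adjT commT.
Qed.

Lemma sumTT x y : \sum_(j < n) ipH (Tadj j x) (Tadj j y) = ipH x y.
Proof.
rewrite -{2}(sumT x) (ip_suml hipH); apply: eq_bigr => j _.
by rewrite adjT.
Qed.

Lemma cj_sum m (f : 'I_m -> R[i]) : cj (\sum_(k < m) f k) = \sum_(k < m) cj (f k).
Proof. by elim/big_rec2: _ => [|k a b _ <-]; rewrite ?cj0 ?cjD. Qed.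

Lemma fuglede i k x : T i (Tadj k x) = Tadj k (T i x).
Proof.
pose A := ipH (T i x) (T i x).
pose a k := Tadj k (T i x). pose b k := T i (Tadj k x).
have h1 : \sum_(k < n) ipH (a k) (a k) = A by rewrite sumTT.
have h2 : \sum_(k < n) ipH (b k) (b k) = A.
  transitivity (\sum_(k < n) ipH (Tadj k (Tadj i x)) (Tadj k (Tadj i x))).
    apply: eq_bigr => k' _.
    by rewrite /b adjT -normT adjT' Tadj_comm.
  by rewrite sumTT -adjT' normT -adjT.
have h3 : \sum_(k < n) ipH (a k) (b k) = A.
  transitivity (\sum_(k < n) ipH (Tadj k (Tadj i (T i x))) (Tadj k x)).
    apply: eq_bigr => k' _.
    by rewrite /a /b adjT' Tadj_comm.
  by rewrite sumTT -adjT'.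
have h4 : \sum_(k < n) ipH (b k) (a k) = A.
  transitivity (cj (\sum_(k < n) ipH (a k) (b k))).
    by rewrite cj_sum; apply: eq_bigr => k' _; rewrite -(ipC hipH).
  by rewrite h3 /A (cj_ipxx hipH).
have hs : \sum_(k < n) ipH (a k - b k) (a k - b k) = 0.
  transitivity (\sum_(k < n) (ipH (a k) (a k) - ipH (a k) (b k))
     - \sum_(k < n) (ipH (b k) (a k) - ipH (b k) (b k))).
    rewrite -sumrB; apply: eq_bigr => k' _.
    by rewrite (ipBl hipH) !(ipBr hipH).
  by rewrite !sumrB h1 h2 h3 h4 !subrr.
have := @psumr_eq0P _ _ _ (fun k => ipH (a k - b k) (a k - b k)) (fun k _ => ipxx_ge0 hipH _) hs k isT.
by move/(ipxx_eq0 hipH)/eqP; rewrite subr_eq0 => /eqP; rewrite /a /b => ->.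
Qed.

Lemma Vsum j a (b : 'I_n -> K) :
  ipK (V j a) (\sum_(k < n) V k (b k)) = ipK a (b j).
Proof.
rewrite (ip_sumr hipK) (bigD1 j) //= Viso big1 ?addr0 // => k hk.
by apply: Vorth; rewrite eq_sym.
Qed.

Lemma rowU h : J h = \sum_(j < n) V j (J (Tadj j h)).
Proof.
set s := \sum_(j < n) _.
have e1 : ipK s s = ipH h h.
  rewrite (ip_suml hipK) -sumTT; apply: eq_bigr => j _.
  by rewrite Vsum Jiso.
have e2 : ipK s (J h) = ipH h h.
  rewrite (ip_suml hipK) -sumTT; apply: eq_bigr => j _.
  by rewrite adjV Vdil Jiso.
have e3 : ipK (J h) s = ipH h h by rewrite (ipC hipK) e2 (cj_ipxx hipH).
apply/eqP; rewrite eq_sym -subr_eq0; apply/eqP/(ipxx_eq0 hipK).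
by rewrite (ipBl hipK) !(ipBr hipK) e1 e2 e3 Jiso !subrr.
Qed.

Section Fixi.
Variable i : 'I_n.

Definition Dv (g : H) : K := V i (J g) - J (T i g).

Fixpoint Rk (k : nat) (h : H) : K :=
  match k with
  | 0 => Dv h
  | k'.+1 => \sum_(j < n) V j (Rk k' (Tadj j h))
  end.

Lemma B1 m u g : ipK (J u) (Rk m g) = 0.
Proof.
elim: m u g => [|m IH] u g /=.
  rewrite /Dv (ipBr hipK) adjV' Vdil !Jiso adjT' subrr //.
rewrite (ip_sumr hipK) big1 // => j _.
by rewrite adjV' Vdil IH.
Qed.

Lemma B2 m h g : ipK (Dv h) (Rk m.+1 g) = 0.
Proof.
rewrite /= (ip_sumr hipK) big1 // => j _.
rewrite /Dv (ipBl hipK) [X in _ - X]adjV' Vdil.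
have [<-|ne] := eqVneq i j.
  by rewrite Viso !B1 subrr.
by rewrite Vorth // B1 subrr.
Qed.

Lemma B3 k l h g : ipK (Rk k.+1 h) (Rk l.+1 g)
   = \sum_(j < n) ipK (Rk k (Tadj j h)) (Rk l (Tadj j g)).
Proof. by rewrite /= (ip_suml hipK); apply: eq_bigr => j _; rewrite Vsum. Qed.

Lemma Borth k l h g : k != l -> ipK (Rk k h) (Rk l g) = 0.
Proof.
elim: k l h g => [|k IH] [|l] h g ne.
- by [].
- exact: (B2 l h g).
- by rewrite (ipC hipK) (B2 k g h) cj0.
- rewrite /= (ip_suml hipK) big1 // => j _; rewrite Vsum IH //.
Qed.

Lemma Bdiag k h : ipK (Rk k h) (Rk k h) = ipH h h - ipH (T i h) (T i h).
Proof.
elim: k h => [|k IH] h.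
  have eA : ipK (J (T i h)) (V i (J h)) = ipH (T i h) (T i h).
    by rewrite adjV' Vdil Jiso -adjT'.
  rewrite /= /Dv (ipBl hipK) !(ipBr hipK) Viso !Jiso eA.
  rewrite (ipC hipK) eA (cj_ipxx hipH).
  by rewrite subrr subr0.
rewrite B3.
under eq_bigr => j _ do rewrite IH.
rewrite sumrB sumTT; congr (_ - _).
rewrite -sumTT; apply: eq_bigr => j _; by rewrite fuglede.
Qed.

End Fixi.
Let rcD (a b : R) : (a + b)%:C%C = a%:C%C + b%:C%C :> R[i]. Proof. exact: rmorphD. Qed.
Let rcB (a b : R) : (a - b)%:C%C = a%:C%C - b%:C%C :> R[i]. Proof. exact: rmorphB. Qed.
Let rcM (a b : R) : (a * b)%:C%C = a%:C%C * b%:C%C :> R[i]. Proof. exact: rmorphM. Qed.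
Let rcX (a : R) k : (a ^+ k)%:C%C = (a%:C%C) ^+ k :> R[i]. Proof. exact: rmorphXn. Qed.
Let rcn k : (k%:R : R)%:C%C = k%:R :> R[i]. Proof. exact: rmorph_nat. Qed.

Lemma D2 al h g :
  ipK (word_op V al (J h)) (J g) = ipK (J (word_op T al h)) (J g).
Proof.
elim: al g => [|j be IH] g //=.
by rewrite adjV Vdil IH !Jiso -adjT.
Qed.

Lemma nsqJ x : nsq ipK (J x) = nsq ipH x.
Proof. by rewrite /nsq Jiso. Qed.

Lemma small0 (x : R) : 0 <= x -> (forall e, 0 < e -> x < e) -> x = 0.
Proof.
move=> h0 h; apply/eqP; rewrite eq_le h0 andbT leNgt; apply/negP => hx.
by have := h x hx; rewrite ltxx.
Qed.

Lemma range_closed (y : nat -> H) z :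
  converges_to ipK (fun k => J (y k)) z -> exists h, z = J h.
Proof.
move=> cv.
have cy : cauchy_seq ipH y.
  move=> e he.
  have he4 : 0 < e / 4 by rewrite divr_gt0.
  have [N hN] := cv _ he4.
  exists N => m k hm hk.
  rewrite -nsqJ JB.
  have -> : J (y m) - J (y k) = (J (y m) - z) + (z - J (y k)).
    by rewrite addrA subrK.
  apply: le_lt_trans (nsq_para hipK _ _) _.
  have h1 := hN m hm; have h2 := hN k hk.
  rewrite (nsqB hipK z) ; lra.
case: hH => _ /(_ y cy) [h hh].
exists h; apply/eqP; rewrite -subr_eq0; apply/eqP; apply: (nsq_le0 hipK).
suff -> : nsq ipK (z - J h) = 0 by [].
apply: small0 => [|e he]; first exact: nsq_ge0.
have he4 : 0 < e / 4 by rewrite divr_gt0.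
have [N1 h1] := cv _ he4.
have [N2 h2] := hh _ he4.
have := h1 (maxn N1 N2) (leq_maxl _ _); have := h2 (maxn N1 N2) (leq_maxr _ _).
rewrite -nsqJ JB => a1 a2.
have -> : z - J h = (z - J (y (maxn N1 N2))) + (J (y (maxn N1 N2)) - J h).
  by rewrite addrA subrK.
apply: le_lt_trans (nsq_para hipK _ _) _.
rewrite (nsqB hipK z); lra.
Qed.

Section Cand.
Variable M : K -> Prop.
Hypothesis hM : commuting_piece_cand ipK Vadj M.

Let Minv j z : M z -> M (Vadj j z). Proof. by case: hM => _ h _; apply: h. Qed.
Let Mcomm j k z : M z -> Vadj j (Vadj k z) = Vadj k (Vadj j z).
Proof. by case: hM => _ _ h; apply: h. Qed.
Let Mscale a z : M z -> M (a *: z).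
Proof.
case: hM => [[h0 hl _]] _ _ hz.
by have := hl a z 0 hz h0; rewrite addr0.
Qed.

Lemma baseA i z h : M z ->
  \sum_(j < n) ipK (Vadj j z) (Dv i (Tadj j h)) = ipK z (Dv i h).
Proof.
move=> hz.
rewrite /Dv; under eq_bigr => j _ do rewrite (ipBr hipK).
rewrite sumrB (ipBr hipK); congr (_ - _).
  transitivity (\sum_(j < n) ipK (Vadj i z) (V j (J (Tadj j h)))).
    apply: eq_bigr => j _; by rewrite adjV' Mcomm // -adjV'.
  by rewrite -(ip_sumr hipK) -rowU adjV'.
transitivity (\sum_(j < n) ipK z (V j (J (Tadj j (T i h))))).
  by apply: eq_bigr => j _; rewrite adjV' fuglede.
by rewrite -(ip_sumr hipK) -rowU.
Qed.

Lemma Aall i k z h : M z -> ipK z (Rk i k h) = ipK z (Dv i h).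
Proof.
elim: k z h => [|k IH] z h hz //=.
rewrite (ip_sumr hipK) -baseA //; apply: eq_bigr => j _.
by rewrite adjV' IH //; apply: Minv.
Qed.

Lemma Ezero i z h : M z -> ipK z (Dv i h) = 0.
Proof.
move=> hz.
set E := ipK z (Dv i h).
set z' := conjc E *: z.
have hz' : M z' by apply: Mscale.
set e := ipK z' (Dv i h).
have ee : e = conjc E * E by rewrite /e /z' (ipZl hipK).
clearbody z'.
have ege : 0 <= e by rewrite ee mulrC mulcJ_ge0.
pose c := ipK (Rk i 0 h) (Rk i 0 h).
pose w (N : nat) := \sum_(k < N) Rk i k h.
have e1 N : ipK z' (w N) = N%:R * e.
  rewrite (ip_sumr hipK).
  under eq_bigr => k _ do rewrite Aall //.
  by rewrite sumr_const card_ord mulr_natl.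
have e2 N : ipK (w N) (w N) = N%:R * c.
  rewrite (ip_suml hipK).
  transitivity (\sum_(k < N) c).
    apply: eq_bigr => k _.
    rewrite (ip_sumr hipK) (bigD1 k) //= big1 ?addr0.
      by rewrite /c !Bdiag.
    by move=> l hl; apply: Borth; rewrite eq_sym.
  by rewrite sumr_const card_ord mulr_natl.
have cj_e : conjc e = e by rewrite ee cjM cjK mulrC.
have e3 N : ipK (w N) z' = N%:R * e.
  by rewrite (ipC hipK) e1 cjM cj_e (conjc_nat _ N).
pose cR := complex.Re c. pose eR := complex.Re e. pose sR := complex.Re (ipK z' z').
have hc : c = cR%:C%C by rewrite /cR /c -(ipxx_real hipK).
have he : e = eR%:C%C by rewrite /eR RRe_real // ger0_real.
have hs : ipK z' z' = sR%:C%C by rewrite /sR -(ipxx_real hipK).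
have heR : 0 <= eR by rewrite -ler0c -he.
have hsR : 0 <= sR by rewrite -ler0c -hs (ipxx_ge0 hipK).
have key : eR = 0.
  apply: (@real_key _ cR _ _ hsR heR) => N t.
  have := ipxx_ge0 hipK (w N - t%:C%C *: z').
  rewrite (ipBl hipK) !(ipBr hipK) !(ipZl hipK) !(ipZr hipK) e1 e2 e3 conjc_real.
  rewrite hc he hs -ler0c.
  set q := (_ - _ - _); suff -> : q = (N%:R * cR - 2 * t * N%:R * eR + t ^+ 2 * sR)%:C%C by [].
  rewrite /q !(rcD, rcB, rcM, rcX, rcn); ring.
have : e = 0 by rewrite he key.
rewrite ee => /eqP; rewrite mulf_eq0 => /orP [|/eqP //].
by rewrite conjc_eq0 => /eqP.
Qed.

Lemma Dword z al h : M z ->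
  ipK z (word_op V al (J h)) = ipK z (J (word_op T al h)).
Proof.
elim: al z h => [|j be IH] z h hz //=.
rewrite adjV' IH; last exact: Minv.
rewrite -adjV'.
have := Ezero j (word_op T be h) hz; rewrite /Dv (ipBr hipK) => /eqP.
by rewrite subr_eq0 => /eqP.
Qed.

Lemma cand_in z : M z -> exists h, z = J h.
Proof.
move=> hz.
have [u [cu hu]] : exists u : nat -> K, converges_to ipK u z /\          forall k, exists (m : nat) (c : 'I_m -> R[i])
                           (w : 'I_m -> seq 'I_n) (h : 'I_m -> H),
            u k = \sum_(l < m) c l *: word_op V (w l) (J (h l)).
  by case: dil => _ [] _; apply.
have ex : forall k, exists yk : H, ipK z (u k) = ipK z (J yk) /\     forall g, ipK (u k) (J g) = ipK (J yk) (J g).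
  move=> k; have [m [c [w [h ->]]]] := hu k.
  exists (\sum_(l < m) c l *: word_op T (w l) (h l)).
  rewrite Jsum; split.
    rewrite !(ip_sumr hipK); apply: eq_bigr => l _.
    by rewrite JZ !(ipZr hipK) Dword.
  move=> g; rewrite !(ip_suml hipK); apply: eq_bigr => l _.
  by rewrite JZ !(ipZl hipK) D2.
pose y k := proj1_sig (constructive_indefinite_description _ (ex k)).
have hy k : ipK z (u k) = ipK z (J (y k)) /\     forall g, ipK (u k) (J g) = ipK (J (y k)) (J g).
  exact: (proj2_sig (constructive_indefinite_description _ (ex k))).
apply: (@range_closed y) => e he.
have [N hN] := cu e he.
exists N => k hk.
have := hN k hk.
have [e1 e2] := hy k.
set a := z - J (y k); set b := u k - J (y k).
have hab : ipK a b = 0.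
  rewrite /a /b (ipBl hipK) !(ipBr hipK) e1 subrr.
  rewrite [ipK (J (y k)) (u k)](ipC hipK) e2 (cj_ipxx hipK) subrr subr0.
  done.
have := nsq_pyth hipK hab.
have -> : a - b = z - u k by rewrite /a /b opprB addrA subrK.
move=> hp; rewrite (nsqB hipK (u k)) (nsqB hipK (J (y k))) -/a hp.
have := nsq_ge0 hipK b; lra.
Qed.

End Cand.
Lemma final : is_max_commuting_space ipK Vadj (fun z : K => exists h : H, z = J h) /\
  (forall i (h : H),
     is_orth_proj ipK (fun z : K => exists h' : H, z = J h') (V i (J h))
                  (J (T i h))).
Proof.
split.
  split.
    split.
      split.
      - by exists 0; rewrite J0.
      - by move=> a x y [hx ->] [hy ->]; exists (a *: hx + hy); rewrite Jlin.
      - move=> u x hu cv.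
        pose y k := proj1_sig (constructive_indefinite_description _ (hu k)).
        have hy k : u k = J (y k).
          exact: (proj2_sig (constructive_indefinite_description _ (hu k))).
        apply: (@range_closed y) => e he.
        have [N hN] := cv e he.
        by exists N => m hm; rewrite -(hy m); apply: hN.
    - by move=> j x [h ->]; exists (Tadj j h); rewrite Vdil.
    - by move=> j k x [h ->]; rewrite !Vdil Tadj_comm.
  by move=> M' hM' x hx; apply: (cand_in hM' hx).
move=> i h; split; first by exists (T i h).
move=> z [h' ->].
by rewrite (ipBl hipK) adjV Vdil !Jiso -adjT subrr.
Qed.

End Main.

Theorem theorem15 (R : realType) (n : nat)
    (H : lmodType R[i]) (ipH : H -> H -> R[i])
    (K : lmodType R[i]) (ipK : K -> K -> R[i])
    (T Tadj : 'I_n -> H -> H) (J : H -> K) (V Vadj : 'I_n -> K -> K) :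
  is_hilbert ipH -> is_hilbert ipK ->
  (forall i, is_adjoint ipH (T i) (Tadj i)) ->
  (forall i, is_adjoint ipK (V i) (Vadj i)) ->
  spherical_unitary T Tadj ->
  is_min_isometric_dilation ipH ipK Tadj J V Vadj ->
  is_max_commuting_space ipK Vadj (fun z : K => exists h : H, z = J h) /\
  (forall i (h : H),
     is_orth_proj ipK (fun z : K => exists h' : H, z = J h') (V i (J h))
                  (J (T i h))).
Proof. exact: final. Qed.
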